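(* Let $A\in\mathbb{C}^{n\times n}$, $B\in\mathbb{C}^{n\times m}$, $C\in\mathbb{C}^{p\times n}$, and suppose $A^*Z_j=C^*h_j+Z_jH_{-j}$ with $Z_j\in\mathbb{C}^{n\times N}$, $h_j\in\mathbb{C}^{p\times N}$, $H_{-j}\in\mathbb{C}^{N\times N}$ such that $0=H_{-j}+H_{-j}^*-(Z_j^*BB^*Z_j+h_j^*h_j)$; put $R_j=C^*+Z_jh_j^*$. Let $\tilde Z\in\mathbb{C}^{n\times k}$, $U_1\in\mathbb{C}^{p\times k}$, $D\in\mathbb{C}^{k\times k}$, $U_2=h_j^*U_1$ satisfy $A^*\tilde Z=C^*U_1+Z_jU_2+\tilde ZD$ (e.g. $\tilde Z=(A^*-\mu I_n)^{-1}R_j$, $U_1=I_p$, $D=\mu I_p$). Let $Y_{12}\in\mathbb{C}^{N\times k}$ solve $Y_{12}D+H_{-j}^*Y_{12}-Z_j^*BB^*\tilde Z=0$, let $Y_{22}\in\mathbb{C}^{k\times k}$ be Hermitian and solve $$0=Y_{12}^*U_2+Y_{22}D+U_2^*Y_{12}+D^*Y_{22}-\tilde Z^*BB^*\tilde Z-U_1^*U_1,$$ and assume $Y_{22}-Y_{12}^*Y_{12}$ is positive definite with Cholesky factorization $G_{22}^*G_{22}$. Define $\hat U_1=(-h_jY_{12}+U_1)G_{22}^{-1}$, $\hat U_2=(-H_{-j}Y_{12}+U_2+Y_{12}D)G_{22}^{-1}$, $\hat D=G_{22}DG_{22}^{-1}$, $\hat Z=(-Z_jY_{12}+\tilde Z)G_{22}^{-1}$,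 $Z_{j+1}=\begin{bmatrix}Z_j&\hat Z\end{bmatrix}$, $h_{j+1}=\begin{bmatrix}h_j&\hat U_1\end{bmatrix}$, $H_{-(j+1)}=\begin{bmatrix}H_{-j}&\hat U_2\\0&\hat D\end{bmatrix}$. Then $A^*Z_{j+1}=C^*h_{j+1}+Z_{j+1}H_{-(j+1)}$, $0=H_{-(j+1)}+H_{-(j+1)}^*-(Z_{j+1}^*BB^*Z_{j+1}+h_{j+1}^*h_{j+1})$, and $R_{j+1}:=C^*+Z_{j+1}h_{j+1}^*=R_j+\hat Z\hat U_1^*$ satisfies $\mathcal{R}(Z_{j+1}Z_{j+1}^* )=R_{j+1}R_{j+1}^*$.
   Context: $\mathcal{R}(X)=A^*X+XA+C^*C-XBB^*X$ is the Riccati residual. The hypothesis on $(Z_j,h_j,H_{-j})$ states that the identity matrix solves the small Lyapunov equation $0=\tilde YH_{-j}+H_{-j}^*\tilde Y-(Z_j^*BB^*Z_j+h_j^*h_j)$. *)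

(* Defs.v *)
From HB Require Import structures.
From mathcomp Require Import all_boot all_order all_algebra.
From mathcomp Require Import complex.
Set Implicit Arguments. Unset Strict Implicit. Unset Printing Implicit Defensive.
Import Order.TTheory GRing.Theory Num.Theory.
Local Open Scope ring_scope.

Definition ctmx (C : numClosedFieldType) m n (A : 'M[C]_(m, n)) : 'M[C]_(n, m) :=
  (map_mx Num.conj A)^T.

Definition is_hermitian_mx (C : numClosedFieldType) n (M : 'M[C]_n) : Prop :=
  ctmx M = M.

Definition posdefmx (C : numClosedFieldType) n (M : 'M[C]_n) : Prop :=
  is_hermitian_mx M /\
  forall x : 'cV[C]_n, x != 0 -> 0 < (ctmx x *m M *m x) ord0 ord0.

Definition cholesky_factor (C : numClosedFieldType) n (M G : 'M[C]_n) : Prop :=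
  [/\ forall i j : 'I_n, (j < i)%N -> G i j = 0,
      forall i : 'I_n, 0 < G i i
    & ctmx G *m G = M].

Definition riccati_res (K : numClosedFieldType) n m p
  (A : 'M[K]_n) (B : 'M[K]_(n, m)) (C : 'M[K]_(p, n)) (X : 'M[K]_n) : 'M[K]_n :=
  ctmx A *m X + X *m A + ctmx C *m C - X *m B *m ctmx B *m X.

(* Main.v *)
Require Import Defs.
From HB Require Import structures.
From mathcomp Require Import all_boot all_order all_algebra.
From mathcomp Require Import complex ring.
Import Order.TTheory GRing.Theory Num.Theory.
Local Open Scope ring_scope.
Section S.
Variable K : numClosedFieldType.
Lemma ctmxM m n p (X : 'M[K]_(m,n)) (Y : 'M[K]_(n,p)) : ctmx (X *m Y) = ctmx Y *m ctmx X.
Proof. by rewrite /ctmx map_mxM trmx_mul. Qed.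
Lemma ctmxD m n (X Y : 'M[K]_(m,n)) : ctmx (X + Y) = ctmx X + ctmx Y.
Proof. by apply/matrixP=> i j; rewrite !mxE rmorphD. Qed.
Lemma ctmxN m n (X : 'M[K]_(m,n)) : ctmx (- X) = - ctmx X.
Proof. by apply/matrixP=> i j; rewrite !mxE rmorphN. Qed.
Lemma ctmx0 m n : ctmx (0 : 'M[K]_(m,n)) = 0.
Proof. by apply/matrixP=> i j; rewrite !mxE rmorph0. Qed.
Lemma ctmxK m n (X : 'M[K]_(m,n)) : ctmx (ctmx X) = X.
Proof. by apply/matrixP=> i j; rewrite !mxE conjCK. Qed.
Lemma ctmx_row m n1 n2 (X : 'M[K]_(m,n1)) (Y : 'M[K]_(m,n2)) :
  ctmx (row_mx X Y) = col_mx (ctmx X) (ctmx Y).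
Proof. by rewrite /ctmx map_row_mx tr_row_mx. Qed.
Lemma ctmx_block m1 m2 n1 n2 (a : 'M[K]_(m1,n1)) (b : 'M[K]_(m1,n2)) (c : 'M[K]_(m2,n1)) (d : 'M[K]_(m2,n2)) :
  ctmx (block_mx a b c d) = block_mx (ctmx a) (ctmx c) (ctmx b) (ctmx d).
Proof. by rewrite /ctmx map_block_mx tr_block_mx. Qed.
Ltac zm := apply/matrixP=> ? ?; rewrite !mxE; ring.
Lemma ric n m p N (A : 'M[K]_n) (B : 'M[K]_(n,m)) (C : 'M[K]_(p,n)) (Z : 'M[K]_(n,N)) (h : 'M[K]_(p,N)) (H : 'M[K]_N) :
  ctmx A *m Z = ctmx C *m h + Z *m H ->
  0 = H + ctmx H - (ctmx Z *m B *m ctmx B *m Z + ctmx h *m h) ->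
  riccati_res A B C (Z *m ctmx Z) = (ctmx C + Z *m ctmx h) *m ctmx (ctmx C + Z *m ctmx h).
Proof.
move=> H1 H2.
have E : ctmx Z *m B *m ctmx B *m Z = H + ctmx H - ctmx h *m h.
  by move/eqP: H2; rewrite eq_sym subr_eq0 => /eqP ->; rewrite addrK.
have EX q (X : 'M[K]_(q,N)) : X *m ctmx Z *m B *m ctmx B *m Z = X *m (H + ctmx H - ctmx h *m h).
  by rewrite -E !mulmxA.
have ZA : ctmx Z *m A = ctmx h *m C + ctmx H *m ctmx Z.
  by rewrite -[A]ctmxK -ctmxM H1 ctmxD !ctmxM !ctmxK.
have ZAX q (X : 'M[K]_(q,N)) : X *m ctmx Z *m A = X *m (ctmx h *m C + ctmx H *m ctmx Z).
  by rewrite -ZA mulmxA.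
rewrite /riccati_res ZAX !mulmxA H1 EX ctmxD ctmxM !ctmxK.
rewrite !(mulmxDl, mulmxDr, mulmxN, mulNmx, mulmxBl, mulmxBr) !mulmxA.
zm.
Qed.

Lemma ctmx1 n : ctmx (1%:M : 'M[K]_n) = 1%:M.
Proof. apply/matrixP=> i j; rewrite !mxE. by rewrite conjC_nat eq_sym. Qed.
End S.
Ltac zm := apply/matrixP=> ? ?; rewrite !mxE; ring.
Ltac ex := rewrite ?(mulmxDl, mulmxDr, mulmxN, mulNmx, mulmxBl, mulmxBr, ctmxD, ctmxN, ctmxM, ctmxK, ctmx0, opprD, opprK) ?mulmxA.

Lemma main_gen (KK : numClosedFieldType) (n m p N k : nat)
  (A : 'M[KK]_n) (B : 'M[KK]_(n, m)) (C : 'M[KK]_(p, n))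
  (Zj : 'M[KK]_(n, N)) (hj : 'M[KK]_(p, N)) (Hj : 'M[KK]_N)
  (Zt : 'M[KK]_(n, k)) (U1 : 'M[KK]_(p, k)) (U2 : 'M[KK]_(N, k))
  (D : 'M[KK]_k) (Y12 : 'M[KK]_(N, k)) (Y22 : 'M[KK]_k)
  (G22 : 'M[KK]_k) :
  ctmx A *m Zj = ctmx C *m hj + Zj *m Hj ->
  0 = Hj + ctmx Hj - (ctmx Zj *m B *m ctmx B *m Zj + ctmx hj *m hj) ->
  U2 = ctmx hj *m U1 ->
  ctmx A *m Zt = ctmx C *m U1 + Zj *m U2 + Zt *m D ->
  Y12 *m D + ctmx Hj *m Y12 - ctmx Zj *m B *m ctmx B *m Zt = 0 ->
  is_hermitian_mx Y22 ->
  0 = ctmx Y12 *m U2 + Y22 *m D + ctmx U2 *m Y12 + ctmx D *m Y22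
      - ctmx Zt *m B *m ctmx B *m Zt - ctmx U1 *m U1 ->
  posdefmx (Y22 - ctmx Y12 *m Y12) ->
  cholesky_factor (Y22 - ctmx Y12 *m Y12) G22 ->
  let Rj := ctmx C + Zj *m ctmx hj in
  let G22i := invmx G22 in
  let hU1 := (- (hj *m Y12) + U1) *m G22i in
  let hU2 := (- (Hj *m Y12) + U2 + Y12 *m D) *m G22i in
  let hD := G22 *m D *m G22i in
  let hZ := (- (Zj *m Y12) + Zt) *m G22i in
  let Zj1 := row_mx Zj hZ in
  let hj1 := row_mx hj hU1 in
  let Hj1 := block_mx Hj hU2 0 hD in
  let Rj1 := ctmx C + Zj1 *m ctmx hj1 in
  [/\ ctmx A *m Zj1 = ctmx C *m hj1 + Zj1 *m Hj1,
      0 = Hj1 + ctmx Hj1 - (ctmx Zj1 *m B *m ctmx B *m Zj1 + ctmx hj1 *m hj1),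
      Rj1 = Rj + hZ *m ctmx hU1
    & riccati_res A B C (Zj1 *m ctmx Zj1) = Rj1 *m ctmx Rj1].
Proof.
move=> H1 H2 H3 H4 H5 HY H6 _ [Gt Gd GG] Rj G22i hU1 hU2 hD hZ Zj1 hj1 Hj1 Rj1.
have Gu : G22 \in unitmx.
  rewrite unitmxE unitfE -det_tr det_trig.
    by apply: lt0r_neq0; apply: prodr_gt0 => i _; rewrite mxE Gd.
  by apply/is_trig_mxP => i j lij; rewrite mxE Gt.
have GiG : G22i *m G22 = 1%:M by apply: mulVmx.
have GGi : G22 *m G22i = 1%:M by apply: mulmxV.
have GiGX q (X : 'M[KK]_(q,k)) : X *m G22i *m G22 = X by rewrite -mulmxA GiG mulmx1.
have P1 : ctmx A *m Zj1 = ctmx C *m hj1 + Zj1 *m Hj1.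
  rewrite /Zj1 /hj1 /Hj1 mul_row_block !mul_mx_row add_row_mx mulmx0 addr0 H1.
  congr row_mx.
  rewrite /hZ /hU1 /hU2 /hD; ex.
  rewrite !GiGX H1 H4; ex. zm.
have E : ctmx Zj *m B *m ctmx B *m Zj = Hj + ctmx Hj - ctmx hj *m hj.
  by move/eqP: H2; rewrite eq_sym subr_eq0 => /eqP ->; rewrite addrK.
have EX q (X : 'M[KK]_(q,N)) : X *m ctmx Zj *m B *m ctmx B *m Zj = X *m (Hj + ctmx Hj - ctmx hj *m hj).
  by rewrite -E !mulmxA.
have F : ctmx Zj *m B *m ctmx B *m Zt = Y12 *m D + ctmx Hj *m Y12.
  by move/eqP: H5; rewrite subr_eq0 => /eqP ->.
have FX q (X : 'M[KK]_(q,N)) : X *m ctmx Zj *m B *m ctmx B *m Zt = X *m (Y12 *m D + ctmx Hj *m Y12).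
  by rewrite -F !mulmxA.
have Fc : ctmx Zt *m B *m ctmx B *m Zj = ctmx D *m ctmx Y12 + ctmx Y12 *m Hj.
  have -> : ctmx Zt *m B *m ctmx B *m Zj = ctmx (ctmx Zj *m B *m ctmx B *m Zt) by rewrite !ctmxM !ctmxK !mulmxA.
  by rewrite F ctmxD !ctmxM ctmxK.
have FcX q (X : 'M[KK]_(q,k)) : X *m ctmx Zt *m B *m ctmx B *m Zj = X *m (ctmx D *m ctmx Y12 + ctmx Y12 *m Hj).
  by rewrite -Fc !mulmxA.
have H3X q (X : 'M[KK]_(q,N)) : X *m ctmx hj *m U1 = X *m U2 by rewrite H3 mulmxA.
have H3c : ctmx U1 *m hj = ctmx U2 by rewrite H3 ctmxM ctmxK.
have H3cX q (X : 'M[KK]_(q,k)) : X *m ctmx U1 *m hj = X *m ctmx U2 by rewrite -H3c mulmxA.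
have X12 : hU2 = ctmx Zj *m B *m ctmx B *m hZ + ctmx hj *m hU1.
  rewrite /hU2 /hZ /hU1; ex. rewrite ?E ?EX ?F ?FX -?H3 ?H3X; ex. zm.
have P2 : 0 = Hj1 + ctmx Hj1 - (ctmx Zj1 *m B *m ctmx B *m Zj1 + ctmx hj1 *m hj1).
  rewrite /Hj1 /Zj1 /hj1 ctmx_block !ctmx_row mul_col_row 2!mul_col_mx mul_col_row.
  rewrite !add_block_mx opp_block_mx add_block_mx -[LHS](block_mx0 _ N k N k).
  congr block_mx.
  - exact: H2.
  - by rewrite X12 (ctmx0 KK k N) addr0 subrr.
  - by rewrite X12 ctmxD !ctmxM !ctmxK add0r !mulmxA subrr.
  have hDE : hD = ctmx G22i *m (ctmx G22 *m G22) *m D *m G22i.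
    by rewrite /hD mulmxA -ctmxM GGi ctmx1 mul1mx.
  have G6 : ctmx Zt *m B *m ctmx B *m Zt = ctmx Y12 *m U2 + Y22 *m D + ctmx U2 *m Y12 + ctmx D *m Y22 - ctmx U1 *m U1 - 0.
    by rewrite [0 in RHS]H6; zm.
  rewrite subr0 in G6.
  have Inner : (ctmx G22 *m G22) *m D + ctmx D *m (ctmx G22 *m G22) -
     (ctmx (- (Zj *m Y12) + Zt) *m B *m ctmx B *m (- (Zj *m Y12) + Zt)
      + ctmx (- (hj *m Y12) + U1) *m (- (hj *m Y12) + U1)) = 0.
    rewrite GG; ex. rewrite ?E ?EX ?F ?FX ?Fc ?FcX ?G6 ?H3X ?H3c ?H3cX; ex. zm.
  transitivity (ctmx G22i *m ((ctmx G22 *m G22) *m D + ctmx D *m (ctmx G22 *m G22) -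
     (ctmx (- (Zj *m Y12) + Zt) *m B *m ctmx B *m (- (Zj *m Y12) + Zt)
      + ctmx (- (hj *m Y12) + U1) *m (- (hj *m Y12) + U1))) *m G22i).
    by rewrite Inner mulmx0 mul0mx.
  rewrite hDE /hZ /hU1; ex. zm.
split => //.
  by rewrite /Rj1 /Zj1 /hj1 /Rj ctmx_row mul_row_col addrA.
exact: (ric _ _ _ _ _ _ _ _ _ _ _ P1 P2).
Qed.

Theorem mainTheorem10 (R : rcfType) (n m p N k : nat)
  (A : 'M[R[i]]_n) (B : 'M[R[i]]_(n, m)) (C : 'M[R[i]]_(p, n))
  (Zj : 'M[R[i]]_(n, N)) (hj : 'M[R[i]]_(p, N)) (Hj : 'M[R[i]]_N)
  (Zt : 'M[R[i]]_(n, k)) (U1 : 'M[R[i]]_(p, k)) (U2 : 'M[R[i]]_(N, k))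
  (D : 'M[R[i]]_k) (Y12 : 'M[R[i]]_(N, k)) (Y22 : 'M[R[i]]_k)
  (G22 : 'M[R[i]]_k) :
  ctmx A *m Zj = ctmx C *m hj + Zj *m Hj ->
  0 = Hj + ctmx Hj - (ctmx Zj *m B *m ctmx B *m Zj + ctmx hj *m hj) ->
  U2 = ctmx hj *m U1 ->
  ctmx A *m Zt = ctmx C *m U1 + Zj *m U2 + Zt *m D ->
  Y12 *m D + ctmx Hj *m Y12 - ctmx Zj *m B *m ctmx B *m Zt = 0 ->
  is_hermitian_mx Y22 ->
  0 = ctmx Y12 *m U2 + Y22 *m D + ctmx U2 *m Y12 + ctmx D *m Y22
      - ctmx Zt *m B *m ctmx B *m Zt - ctmx U1 *m U1 ->
  posdefmx (Y22 - ctmx Y12 *m Y12) ->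
  cholesky_factor (Y22 - ctmx Y12 *m Y12) G22 ->
  let Rj := ctmx C + Zj *m ctmx hj in
  let G22i := invmx G22 in
  let hU1 := (- (hj *m Y12) + U1) *m G22i in
  let hU2 := (- (Hj *m Y12) + U2 + Y12 *m D) *m G22i in
  let hD := G22 *m D *m G22i in
  let hZ := (- (Zj *m Y12) + Zt) *m G22i in
  let Zj1 := row_mx Zj hZ in
  let hj1 := row_mx hj hU1 in
  let Hj1 := block_mx Hj hU2 0 hD in
  let Rj1 := ctmx C + Zj1 *m ctmx hj1 in
  [/\ ctmx A *m Zj1 = ctmx C *m hj1 + Zj1 *m Hj1,
      0 = Hj1 + ctmx Hj1 - (ctmx Zj1 *m B *m ctmx B *m Zj1 + ctmx hj1 *m hj1),
      Rj1 = Rj + hZ *m ctmx hU1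
    & riccati_res A B C (Zj1 *m ctmx Zj1) = Rj1 *m ctmx Rj1].
Proof. exact: main_gen. Qed.
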